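(* Let $\mathcal{X}$ be a finite nonempty set of types, $n=(n_x)_{x\in\mathcal{X}}$ nonnegative integers, and $\Phi=(\Phi_{xy})_{x,y\in\mathcal{X}}$ a real matrix with $\Phi_{xy}=\Phi_{yx}$. Then $\mathcal{W}_{\mathcal{F}}(n,\Phi)=\mathcal{W}_{\mathcal{B}}(n,n,\Phi/2)$. Moreover, the maximization problem defining $\mathcal{W}_{\mathcal{F}}(n,\Phi)$ has a half-integral optimal solution (all entries in $\frac12\mathbb{N}$).
   Context: Fractional roommate matchings: $\mathcal{F}(n)=\{\mu=(\mu_{xy})_{x,y\in\mathcal{X}}:\ \mu_{xy}\ge0\text{ real},\ \mu_{xy}=\mu_{yx},\ 2\mu_{xx}+\sum_{y\ne x}\mu_{xy}\le n_x\ \forall x\}$, and $\mathcal{W}_{\mathcal{F}}(n,\Phi)=\max_{\mu\in\mathcal{F}(n)}\bigl(\sum_x\mu_{xx}\Phi_{xx}+\sum_{x\ne y}\mu_{xy}\Phi_{xy}/2\bigr)$. Bipartite problem: $\mathcal{B}(n,n)=\{\nu\in\mathbb{N}^{\mathcal{X}\times\mathcal{X}}:\ \sum_y\nu_{xy}\le n_x\ \forall x,\ \sum_x\nu_{xy}\le n_y\ \forall y\}$ and $\mathcal{W}_{\mathcal{B}}(n,n,\Phi/2)=\max_{\nu\in\mathcal{B}(n,n)}\sum_{x,y}\nu_{xy}\Phi_{xy}/2$. *)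

(* Defs.v *)
From HB Require Import structures.
From mathcomp Require Import all_boot all_order all_algebra.
From mathcomp Require Import reals.
Set Implicit Arguments. Unset Strict Implicit. Unset Printing Implicit Defensive.
Import Order.TTheory GRing.Theory Num.Theory.
Local Open Scope ring_scope.

Section Defs.
Variables (R : realType) (X : finType).

Definition frac_matching (n : X -> nat) (mu : X -> X -> R) : Prop :=
  (forall x y, 0 <= mu x y) /\ (forall x y, mu x y = mu y x) /\
  (forall x, 2 * mu x x + \sum_(y | y != x) mu x y <= (n x)%:R).

Definition frac_obj (Phi : X -> X -> R) (mu : X -> X -> R) : R :=
  \sum_x mu x x * Phi x x + \sum_x \sum_(y | y != x) mu x y * Phi x y / 2.

Definition bip_matching (n : X -> nat) (nu : X -> X -> nat) : Prop :=
  (forall x, (\sum_y nu x y <= n x)%N) /\ (forall y, (\sum_x nu x y <= n y)%N).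

Definition bip_obj (Phi : X -> X -> R) (nu : X -> X -> nat) : R :=
  \sum_x \sum_y (nu x y)%:R * (Phi x y / 2).

Definition half_integral (mu : X -> X -> R) : Prop :=
  forall x y, exists k : nat, mu x y = k%:R / 2.
End Defs.

Definition is_max_value (T : Type) (R : realType) (S : T -> Prop) (f : T -> R) (v : R) : Prop :=
  (exists t, S t /\ f t = v) /\ (forall t, S t -> f t <= v).

(* Main.v *)
From Stdlib Require Import FunctionalExtensionality.
Require Import Defs.
From HB Require Import structures.
From mathcomp Require Import all_boot all_order all_algebra.
From mathcomp Require Import reals.
From mathcomp Require Import zify ring lra.
Import Order.TTheory GRing.Theory Num.Theory.
Local Open Scope ring_scope.

Lemma big_opt (R : realType) (X : finType) (f : option X -> R) :
  \sum_(o : option X) f o = f None + \sum_x f (Some x).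
Proof.
rewrite (bigD1 None) //=; congr (_ + _).
rewrite (reindex_omap Some (fun o => o)); last by case.
by apply: eq_bigl => x; rewrite eqxx.
Qed.

Section Core.
Variables (R : realType) (I J : finType).
Implicit Types (v d w : I * J -> R).

Definition rs v i := \sum_(p : I * J | p.1 == i) v p.
Definition cs v j := \sum_(p : I * J | p.2 == j) v p.
Definition nonint v := [set p | v p \isn't a Num.int].
Definition obj w v := \sum_p v p * w p.

Lemma step v d w : (forall p, 0 <= v p) ->
  (forall p, d p != 0 -> v p \isn't a Num.int) -> (exists p, d p != 0) ->
  (forall i, rs d i = 0) -> (forall j, cs d j = 0) ->
  exists v', [/\ (forall p, 0 <= v' p), (forall i, rs v' i = rs v i),
    (forall j, cs v' j = cs v j), obj w v <= obj w v' &
    (#|nonint v'| < #|nonint v|)%N].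
Proof.
move=> v0 supp nz rd cd.
wlog sg : d supp nz rd cd / 0 <= \sum_p d p * w p.
  move=> H; case: (lerP 0 (\sum_p d p * w p)) => s; first exact: (H d).
  apply: (H (fun p => - d p)).
  - by move=> p; rewrite oppr_eq0; apply: supp.
  - by case: nz => p hp; exists p; rewrite oppr_eq0.
  - by move=> i; rewrite /rs sumrN -/(rs d i) rd oppr0.
  - by move=> j; rewrite /cs sumrN -/(cs d j) cd oppr0.
  - rewrite (eq_bigr (fun p => - (d p * w p))); last by move=> p _; rewrite mulNr.
    by rewrite sumrN oppr_ge0 ltW.
case: nz => p0 hp0.
pose fl p := ((Num.floor (v p))%:~R : R).
pose t p := if 0 < d p then (fl p + 1 - v p) / d p else (fl p - v p) / d p.
pose q := [arg min_(p < p0 | d p != 0) t p]%O.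
have [Pq qmin] : d q != 0 /\ forall p, d p != 0 -> t q <= t p.
  rewrite /q; case: arg_minP => // r Pr H; split => // p Pp; exact: H.
have flv p : fl p <= v p by rewrite /fl floor_le.
have vfl p : v p < fl p + 1.
  by have := floorD1_gt (v p); rewrite /fl intrD.
have fl0 p : 0 <= fl p by rewrite /fl ler0z floor_ge0.
have t0 p : d p != 0 -> 0 <= t p.
  move=> dp; rewrite /t; case: ifP => hd.
    by apply: divr_ge0; [rewrite subr_ge0 ltW | rewrite ltW].
  have hd' : d p < 0 by rewrite lt_neqAle dp /= leNgt hd.
  by apply: mulr_le0; [rewrite subr_le0 | rewrite invr_le0 ltW].
set e := t q.
have e0 : 0 <= e := t0 q Pq.
exists (fun p => v p + e * d p); split.
- move=> p; have [dp|dp] := eqVneq (d p) 0; first by rewrite dp mulr0 addr0.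
  have := qmin p dp; rewrite -/e /t; case: ifP => hd he.
    by apply: addr_ge0 => //; apply: mulr_ge0 => //; apply: ltW.
  have hd' : d p < 0 by rewrite lt_neqAle dp /= leNgt hd.
  have : (fl p - v p) / d p * d p <= e * d p by rewrite ler_wnM2r // ltW.
  rewrite divfK // => h; apply: le_trans (fl0 p) _.
  by rewrite -lerBlDl.
- move=> i; rewrite /rs big_split /= -mulr_sumr -/(rs d i) rd mulr0 addr0 //.
- move=> j; rewrite /cs big_split /= -mulr_sumr -/(cs d j) cd mulr0 addr0 //.
- rewrite /obj [X in _ <= X](eq_bigr (fun p => v p * w p + e * (d p * w p))); last first.
    by move=> p _ /=; rewrite mulrDl mulrA.
  by rewrite big_split /= -mulr_sumr lerDl mulr_ge0.
- apply: proper_card; apply/properP; split.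
    apply/subsetP => p; rewrite !inE; apply: contraNN => hint.
    have [dp|dp] := eqVneq (d p) 0; first by rewrite dp mulr0 addr0.
    by have := supp p dp; rewrite hint.
  exists q; rewrite !inE; first exact: supp.
  rewrite negbK /e /t; case: ifP => _; rewrite divfK // addrC subrK.
    by rewrite rpredD ?rpred1 // /fl intr_int.
  by rewrite /fl intr_int.
Qed.

Lemma count2 (K : finType) (pi : I * J -> K) (F : {set I * J}) :
  (forall p, p \in F -> exists q, [/\ q \in F, pi q = pi p & q != p]) ->
  (2 * #|pi @: F| <= #|F|)%N.
Proof.
move=> H.
rewrite -[#|F|]sum1_card (partition_big pi (mem (pi @: F))) /=; last first.
  by move=> p pF; apply: imset_f.
rewrite mulnC -sum_nat_const; apply: leq_sum => k /imsetP [p pF ->].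
have [q [qF qe qp]] := H p pF.
rewrite (bigD1 p) /=; last by rewrite pF eqxx.
rewrite (bigD1 q) /=; last by rewrite qF qe eqxx qp.
by rewrite addnA leq_addr.
Qed.

Lemma two_in v (K : finType) (pi : I * J -> K) p :
  (\sum_(q | pi q == pi p) v q \is a Num.int) ->
  p \in nonint v -> exists q, [/\ q \in nonint v, pi q = pi p & q != p].
Proof.
move=> hs pF.
case: (boolP [exists q, [&& q \in nonint v, pi q == pi p & q != p]]).
  by case/existsP => q /and3P [a /eqP b c]; exists q.
rewrite negb_exists => /forallP H.
move: pF; rewrite inE => /negP; case.
have -> : v p = \sum_(q | pi q == pi p) v q - \sum_(q | (pi q == pi p) && (q != p)) v q.
  by rewrite (bigD1 p) //= addrK.
apply: rpredB => //; apply: rpred_sum => q /andP [h1 h2].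
by have := H q; rewrite h1 h2 andbT inE andbT negbK.
Qed.

Lemma sum_F (F : {set I * J}) p0 (p0F : p0 \in F) (u : 'rV[R]_#|F|) (g : I * J -> R) :
  \sum_p g p * (if p \in F then u 0 (enum_rank_in p0F p) else 0) =
  \sum_(a < #|F|) g (enum_val a) * u 0 a.
Proof.
rewrite (bigID (mem F)) /= [X in _ + X]big1 ?addr0; last first.
  by move=> p /negbTE ->; rewrite mulr0.
rewrite big_enum_val; apply: eq_bigr => a _.
by rewrite enum_valP enum_valK_in.
Qed.

Lemma kernel v p0 : (forall i, rs v i \is a Num.int) ->
  (forall j, cs v j \is a Num.int) -> p0 \in nonint v ->
  exists d, [/\ (forall p, d p != 0 -> v p \isn't a Num.int),
    (exists p, d p != 0), (forall i, rs d i = 0) & (forall j, cs d j = 0)].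
Proof.
move=> hr hc p0F.
set F := nonint v.
set rows := [set p.1 | p in F].
set cols := [set p.2 | p in F].
set cols' := cols :\ p0.2.
have c1 : (2 * #|rows| <= #|F|)%N.
  apply: count2 => p pF; apply: two_in => //; exact: hr.
have c2 : (2 * #|cols| <= #|F|)%N.
  apply: count2 => p pF; apply: two_in => //; exact: hc.
have j0c : p0.2 \in cols by apply: imset_f.
have ccard : #|cols| = (#|cols'|).+1 by rewrite (cardsD1 p0.2) j0c.
have lt : (#|rows| + #|cols'| < #|F|)%N.
  move: c1 c2; rewrite ccard; lia.
pose A1 : 'M[R]_(#|F|, #|rows|) := \matrix_(a, b) ((enum_val a).1 == enum_val b)%:R.
pose A2 : 'M[R]_(#|F|, #|cols'|) := \matrix_(a, b) ((enum_val a).2 == enum_val b)%:R.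
have A1E a b : A1 a b = ((enum_val a).1 == enum_val b)%:R by rewrite /A1 mxE.
have A2E a b : A2 a b = ((enum_val a).2 == enum_val b)%:R by rewrite /A2 mxE.
pose K := kermx (row_mx A1 A2).
have rK : (0 < \rank K)%N.
  rewrite mxrank_ker; have := rank_leq_col (row_mx A1 A2); lia.
have [r ur] : exists r, row r K != 0.
  case: (boolP [exists r, row r K != 0]); first by case/existsP => r h; exists r.
  rewrite negb_exists => /forallP H; move: rK.
  suff -> : K = 0 by rewrite mxrank0.
  by apply/row_matrixP => r; rewrite row0; apply/eqP; move: (H r); rewrite negbK.
set u := row r K in ur.
have uA : u *m row_mx A1 A2 = 0 by apply/eqP; rewrite -sub_kermx row_sub.
move: uA; rewrite mul_mx_row => /eqP; rewrite row_mx_eq0 => /andP [/eqP u1 /eqP u2].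
pose d p := if p \in F then u 0 (enum_rank_in p0F p) else 0.
have dF p : p \notin F -> d p = 0 by rewrite /d => /negbTE ->.
have sF g : \sum_p g p * d p = \sum_(a < #|F|) g (enum_val a) * u 0 a.
  exact: sum_F.
have rsd i : rs d i = \sum_p (p.1 == i)%:R * d p.
  rewrite /rs big_mkcond; apply: eq_bigr => p _.
  by case: eqP => _; rewrite ?mul1r ?mul0r.
have csd j : cs d j = \sum_p (p.2 == j)%:R * d p.
  rewrite /cs big_mkcond; apply: eq_bigr => p _.
  by case: eqP => _; rewrite ?mul1r ?mul0r.
have rows0 i : rs d i = 0.
  case: (boolP (i \in rows)) => hi.
    rewrite rsd sF.
    have [b hb] : exists b : 'I_#|rows|, enum_val b = i.
      by exists (enum_rank_in hi i); exact: enum_rankK_in.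
    have := congr1 (fun M : 'M[R]_(1, #|rows|) => M 0 b) u1.
    rewrite !mxE => h; apply: etrans h; apply: eq_bigr => a _.
    rewrite A1E mulrC -hb. reflexivity.
  rewrite /rs big1 // => p /eqP e; apply: dF; apply: contra hi => pF.
  by rewrite -e imset_f.
have cols0 j : j != p0.2 -> cs d j = 0.
  move=> jn; case: (boolP (j \in cols')) => hj.
    rewrite csd sF.
    have [b hb] : exists b : 'I_#|cols'|, enum_val b = j.
      by exists (enum_rank_in hj j); exact: enum_rankK_in.
    have := congr1 (fun M : 'M[R]_(1, #|cols'|) => M 0 b) u2.
    rewrite !mxE => h; apply: etrans h; apply: eq_bigr => a _.
    by rewrite A2E mulrC -hb.
  rewrite /cs big1 // => p /eqP e; apply: dF; apply: contra hj => pF.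
  by rewrite /cols' in_setD1 jn -e imset_f.
exists d; split => //.
- move=> p dp; case: (boolP (p \in F)) => [|h]; first by rewrite inE.
  by move: dp; rewrite dF ?eqxx.
- case: (boolP [exists a, u 0 a != 0]).
    case/existsP => a ha; exists (enum_val a).
    by rewrite /d enum_valP enum_valK_in.
  rewrite negb_exists => /forallP H; move: ur; case/negP.
  apply/eqP/matrixP => x y; move: (H y); rewrite negbK [x]ord1 => /eqP ->; by rewrite mxE.
- move=> j; case: (eqVneq j p0.2) => [->|]; last exact: cols0.
  have tot1 : \sum_p d p = 0.
    rewrite (partition_big (fun p => p.1) predT) //=.
    by apply: big1 => i _; exact: rows0 i.
  have : \sum_p d p = cs d p0.2.
    rewrite (partition_big (fun p => p.2) predT) //= (bigD1 p0.2) //=.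
    rewrite [X in _ + X]big1 ?addr0 //.
  by move=> h; rewrite -h tot1.
Qed.

Lemma core w N : forall v, (#|nonint v| <= N)%N -> (forall p, 0 <= v p) ->
  (forall i, rs v i \is a Num.int) -> (forall j, cs v j \is a Num.int) ->
  exists v', [/\ (forall p, 0 <= v' p), (forall p, v' p \is a Num.int),
    (forall i, rs v' i = rs v i), (forall j, cs v' j = cs v j) &
    obj w v <= obj w v'].
Proof.
elim: N => [|N IH] v hN v0 hr hc.
  have hF : nonint v = set0 by apply/eqP; rewrite -cards_eq0 -leqn0.
  exists v; split => // p; apply/negPn/negP => h.
  have hp : p \in nonint v by rewrite inE h.
  by rewrite hF inE in hp.
case: (set_0Vmem (nonint v)) => [hF|[p0 p0F]].
  exists v; split => // p; apply/negPn/negP => h.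
  have hp : p \in nonint v by rewrite inE h.
  by rewrite hF inE in hp.
have [d [supp nz rd cd]] := kernel v p0 hr hc p0F.
have [v1 [v10 r1 c1 o1 lt1]] := step v d w v0 supp nz rd cd.
have h1 : (#|nonint v1| <= N)%N by rewrite -ltnS; apply: leq_trans hN.
have h2 : forall i, rs v1 i \is a Num.int by move=> i; rewrite r1.
have h3 : forall j, cs v1 j \is a Num.int by move=> j; rewrite c1.
have [v2 [v20 i2 r2 c2 o2]] := IH v1 h1 v10 h2 h3.
exists v2; split => //.
- by move=> i; rewrite r2 r1.
- by move=> j; rewrite c2 c1.
- exact: le_trans o2.
Qed.

Lemma rsE f i : rs f i = \sum_j f (i, j).
Proof.
have -> : \sum_j f (i, j) = \sum_(k | k == i) \sum_j f (k, j) by rewrite big_pred1_eq.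
rewrite pair_big /rs.
by apply: eq_big => [[a b]|[a b] _] //=; rewrite andbT.
Qed.

Lemma csE f j : cs f j = \sum_i f (i, j).
Proof.
rewrite (eq_bigr (fun i => \sum_(k | k == j) f (i, k))); last first.
  by move=> i _; rewrite big_pred1_eq.
rewrite pair_big /cs.
by apply: eq_big => [[a b]|[a b] _] //=.
Qed.

Lemma objE w f : obj w f = \sum_i \sum_j f (i, j) * w (i, j).
Proof.
rewrite pair_big /obj.
by apply: eq_big => [[a b]|[a b] _] //=.
Qed.
End Core.

Arguments rs {R I J}. Arguments cs {R I J}. Arguments obj {R I J}.
Arguments nonint {R I J}. Arguments core {R I J}.
Arguments rsE {R I J}. Arguments csE {R I J}. Arguments objE {R I J}.

Lemma round (R : realType) (X : finType) (a b : X -> nat) (nu w : X -> X -> R) :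
  (forall x y, 0 <= nu x y) -> (forall x, \sum_y nu x y <= (a x)%:R) ->
  (forall y, \sum_x nu x y <= (b y)%:R) ->
  exists nu' : X -> X -> nat, [/\ (forall x, (\sum_y nu' x y <= a x)%N),
    (forall y, (\sum_x nu' x y <= b y)%N) &
    \sum_x \sum_y nu x y * w x y <= \sum_x \sum_y (nu' x y)%:R * w x y].
Proof.
move=> nu0 ha hb.
pose T := \sum_x \sum_y nu x y.
pose V (p : option X * option X) : R := match p with
  | (Some x, Some y) => nu x y
  | (Some x, None) => (a x)%:R - \sum_y nu x y
  | (None, Some y) => (b y)%:R - \sum_x nu x y
  | (None, None) => T end.
pose W (p : option X * option X) : R := match p with
  | (Some x, Some y) => w x y
  | _ => 0 end.
have objW f : obj W f = \sum_x \sum_y f (Some x, Some y) * w x y.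
  rewrite objE big_opt big1 ?add0r; last by case=> [y|] _; rewrite mulr0.
  apply: eq_bigr => x _; rewrite big_opt mulr0 add0r //.
have V0 p : 0 <= V p.
  case: p => [[x|] [y|]] //=; rewrite ?subr_ge0 //.
  by apply: sumr_ge0 => x _; apply: sumr_ge0.
have rS x : rs V (Some x) = (a x)%:R by rewrite rsE big_opt /= subrK.
have cS y : cs V (Some y) = (b y)%:R by rewrite csE big_opt /= subrK.
have rN : rs V None \is a Num.int.
  rewrite rsE big_opt /= sumrB exchange_big /= -/T addrC subrK.
  by apply: rpred_sum => y _; apply: natr_int.
have cN : cs V None \is a Num.int.
  rewrite csE big_opt /= sumrB -/T addrC subrK.
  by apply: rpred_sum => y _; apply: natr_int.
have hr o : rs V o \is a Num.int by case: o => [x|] //; rewrite rS natr_int.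
have hc o : cs V o \is a Num.int by case: o => [x|] //; rewrite cS natr_int.
have [V' [V'0 V'i r' c' o']] := core W _ V (leqnn _) V0 hr hc.
have V'n p : V' p \is a Num.nat by rewrite -intrEge0.
exists (fun x y => Num.truncn (V' (Some x, Some y))); split.
- move=> x; rewrite -(ler_nat R) natr_sum.
  under eq_bigr do rewrite truncnK //.
  rewrite -rS -r' rsE big_opt lerDr //.
- move=> y; rewrite -(ler_nat R) natr_sum.
  under eq_bigr do rewrite truncnK //.
  rewrite -cS -c' csE big_opt lerDr //.
- have -> : \sum_x \sum_y (Num.truncn (V' (Some x, Some y)))%:R * w x y =
      \sum_x \sum_y V' (Some x, Some y) * w x y.
    by apply: eq_bigr => x _; apply: eq_bigr => y _; rewrite truncnK.
  by have := o'; rewrite !objW.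
Qed.

Lemma sumD1 (R : realType) (X : finType) (f : X -> R) x :
  \sum_(y | y != x) f y = \sum_y f y - f x.
Proof. by rewrite [in RHS](bigD1 x) //= addrC addrK. Qed.

Section Main.
Variables (R : realType) (X : finType) (n : X -> nat) (Phi : X -> X -> R).
Hypothesis Phi_sym : forall x y, Phi x y = Phi y x.

Lemma fracA mu : frac_matching n mu ->
  exists nu, bip_matching n nu /\ frac_obj Phi mu <= bip_obj Phi nu.
Proof.
case=> [mu0 [musym mun]].
pose nu x y := if x == y then 2 * mu x x else mu x y.
have rowE x : \sum_y nu x y = 2 * mu x x + \sum_(y | y != x) mu x y.
  rewrite (bigD1 x) //= /nu eqxx; congr (_ + _); apply: eq_bigr => y hy.
  by rewrite eq_sym (negbTE hy).
have colE y : \sum_x nu x y = 2 * mu y y + \sum_(x | x != y) mu y x.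
  rewrite (bigD1 y) //= /nu eqxx; congr (_ + _); apply: eq_bigr => x hx.
  by rewrite (negbTE hx) musym.
have nu0 x y : 0 <= nu x y.
  by rewrite /nu; case: eqP => _ //; rewrite mulr_ge0.
have hr x : \sum_y nu x y <= (n x)%:R by rewrite rowE; exact: mun.
have hc y : \sum_x nu x y <= (n y)%:R by rewrite colE; exact: mun.
have [nu' [h1 h2 h3]] := round R X n n nu (fun x y => Phi x y / 2) nu0 hr hc.
exists nu'; split; first by split.
apply: le_trans h3; rewrite le_eqVlt; apply/orP; left; apply/eqP.
rewrite /frac_obj -big_split /=; apply: eq_bigr => x _.
rewrite [RHS](bigD1 x) //= /nu eqxx; congr (_ + _).
  by field.
apply: eq_bigr => y hy; rewrite eq_sym (negbTE hy).
by field.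
Qed.


Definition muB (nu : X -> X -> nat) (x y : X) : R :=
  if x == y then (nu x x)%:R / 2 else ((nu x y)%:R + (nu y x)%:R) / 2.

Lemma fracB nu : bip_matching n nu ->
  [/\ frac_matching n (muB nu), half_integral (muB nu) &
      frac_obj Phi (muB nu) = bip_obj Phi nu].
Proof.
case=> hr hc.
have offE x y : y != x -> muB nu x y = ((nu x y)%:R + (nu y x)%:R) / 2.
  by move=> hy; rewrite /muB eq_sym (negbTE hy).
have diagE x : muB nu x x = (nu x x)%:R / 2 by rewrite /muB eqxx.
split.
- split; [|split].
  + by move=> x y; rewrite /muB; case: eqP => _; rewrite divr_ge0 ?addr_ge0 ?ler0n.
  + move=> x y; rewrite /muB eq_sym; case: eqP => [->|_] //.
    by rewrite addrC.
  + move=> x; rewrite diagE (eq_bigr _ (offE x)) -mulr_suml big_split /=.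
    rewrite !sumD1.
    have Rx : \sum_y ((nu x y)%:R : R) <= (n x)%:R by rewrite -natr_sum ler_nat.
    have Cx : \sum_y ((nu y x)%:R : R) <= (n x)%:R by rewrite -natr_sum ler_nat.
    lra.
- move=> x y; rewrite /muB; case: eqP => _.
    by exists (nu x x).
  by exists (nu x y + nu y x)%N; rewrite natrD.
- pose g x y := (nu x y)%:R * Phi x y.
  pose A := \sum_x \sum_y g x y.
  pose D := \sum_x g x x.
  have A' : \sum_x \sum_y (nu y x)%:R * Phi x y = A.
    rewrite exchange_big /=; apply: eq_bigr => x _; apply: eq_bigr => y _.
    by rewrite Phi_sym.
  have bE : bip_obj Phi nu = A / 2.
    rewrite /bip_obj /A mulr_suml; apply: eq_bigr => x _.
    rewrite mulr_suml; apply: eq_bigr => y _; rewrite /g; by field.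
  have fE1 : \sum_x muB nu x x * Phi x x = D / 2.
    rewrite /D mulr_suml; apply: eq_bigr => z _; rewrite diagE /g; by field.
  have fE2 : \sum_x \sum_(y | y != x) muB nu x y * Phi x y / 2 =
      (\sum_x \sum_(y | y != x) g x y + \sum_x \sum_(y | y != x) (nu y x)%:R * Phi x y) / 4.
    rewrite -big_split mulr_suml; apply: eq_bigr => x _.
    rewrite -big_split mulr_suml; apply: eq_bigr => y hy.
    rewrite offE // /g /=; by field.
  have s1 : \sum_x \sum_(y | y != x) g x y = A - D.
    rewrite /A /D -sumrB; apply: eq_bigr => x _; exact: sumD1.
  have s2 : \sum_x \sum_(y | y != x) (nu y x)%:R * Phi x y = A - D.
    rewrite -A' /D -sumrB; apply: eq_bigr => x _; exact: sumD1.
  rewrite /frac_obj fE1 fE2 s1 s2 bE; by field.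
Qed.

Lemma bip_max : exists nu, bip_matching n nu /\
  forall nu', bip_matching n nu' -> bip_obj Phi nu' <= bip_obj Phi nu.
Proof.
pose N := (\sum_x n x)%N.
pose tonu (f : {ffun X * X -> 'I_N.+1}) := fun x y => nat_of_ord (f (x, y)).
pose feas (f : {ffun X * X -> 'I_N.+1}) :=
  [forall x, \sum_y tonu f x y <= n x]%N && [forall y, \sum_x tonu f x y <= n y]%N.
pose f0 : {ffun X * X -> 'I_N.+1} := [ffun _ => ord0].
have f0F : feas f0.
  apply/andP; split; apply/forallP => x; rewrite big1 // => y _; by rewrite /tonu ffunE.
have feasP f : feas f <-> bip_matching n (tonu f).
  split; first by case/andP => /forallP h1 /forallP h2; split.
  by case=> h1 h2; apply/andP; split; apply/forallP.
case: (@arg_maxP _ R _ f0 feas (fun f => bip_obj Phi (tonu f)) f0F) => g gF gmax.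
exists (tonu g); split; first by apply/feasP.
move=> nu' hnu'.
have bnd x y : (nu' x y < N.+1)%N.
  rewrite ltnS; apply: (leq_trans _ (leq_trans (proj1 hnu' x) _)).
    by rewrite (bigD1 y) //= leq_addr.
  by rewrite /N (bigD1 x) //= leq_addr.
pose f' : {ffun X * X -> 'I_N.+1} := [ffun p => inord (nu' p.1 p.2)].
have tf' : tonu f' = nu'.
  by do 2 (apply: functional_extensionality => ?); rewrite /tonu ffunE /= inordK.
have := gmax f'; rewrite tf'; apply; apply/feasP; by rewrite tf'.
Qed.

Lemma main_sec : exists w : R,
    is_max_value (frac_matching n) (frac_obj Phi) w /\
    is_max_value (bip_matching n) (bip_obj Phi) w /\
    (exists mu, frac_matching n mu /\ half_integral mu /\ frac_obj Phi mu = w).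
Proof.
have [nu [hnu numax]] := bip_max.
have [f1 f2 f3] := fracB nu hnu.
exists (bip_obj Phi nu); split; [|split].
- split; first by exists (muB nu).
  move=> mu hmu; have [nu' [h1 h2]] := fracA mu hmu.
  exact: le_trans h2 (numax _ h1).
- split; first by exists nu.
  exact: numax.
- by exists (muB nu).
Qed.
End Main.

Theorem lemma1 (R : realType) (X : finType) (x0 : X) (n : X -> nat)
    (Phi : X -> X -> R) (Phi_sym : forall x y, Phi x y = Phi y x) :
  exists w : R,
    is_max_value (frac_matching n) (frac_obj Phi) w /\
    is_max_value (bip_matching n) (bip_obj Phi) w /\
    (exists mu, frac_matching n mu /\ half_integral mu /\ frac_obj Phi mu = w).
Proof. exact: (main_sec R X n Phi Phi_sym). Qed.
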